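(* Let $(M,w)$ be an oriented Poisson manifold, $g$ a Riemannian metric on $M$, $dV_g=\sqrt{\det g}\,dx^1\wedge\cdots\wedge dx^n$, and $\Phi=(\det g)\,dx^1\wedge\cdots\wedge dx^n\wedge dy^1\wedge\cdots\wedge dy^n$, a volume form on $TM$. Then the modular vector field of $(TM,w^C,\Phi)$ is $$\Delta^{TM}_\Phi=2\,(\Delta^M_{dV_g})^V,$$ where $\Delta^M_{dV_g}=\sum_k\left(\frac{\partial w^{ik}}{\partial x^k}+w^{ik}\frac{\partial\ln\sqrt{\det g}}{\partial x^k}\right)\frac{\partial}{\partial x^i}$ is the modular vector field of $(M,w,dV_g)$.
   Context: Coordinates $(x^i)$ on $M$, induced coordinates $(x^i,y^i)$ on $TM$. $w=\frac12w^{ij}\partial_{x^i}\wedge\partial_{x^j}$ and its complete lift $w^C=w^{ij}\partial_{x^i}\wedge\partial_{y^j}+\frac12y^k\frac{\partial w^{ij}}{\partial x^k}\partial_{y^i}\wedge\partial_{y^j}$. For a Poisson manifold $(N,\Pi)$ with volume form $\mu$, the Hamiltonian vector field is $X_f=\{f,\cdot\}_\Pi$ (on $M$: $X_f=\frac{\partial f}{\partial x^i}w^{ij}\partial_{x^j}$), the divergence is defined by $\mathcal L_X\mu=(\mathrm{div}_\mu X)\mu$, and the modular vector field $\Delta_\mu$ is the vector field $f\mapsto\mathrm{div}_\mu X_f$. The vertical lift of $X=X^i\partial_{x^i}$ is $X^V=X^i\partial_{y^i}$. *)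

(* Defs.v *)
From HB Require Import structures.
From mathcomp Require Import all_boot all_order all_algebra.
From mathcomp Require Import all_classical all_reals all_analysis.
Set Implicit Arguments. Unset Strict Implicit. Unset Printing Implicit Defensive.
Import Order.TTheory GRing.Theory Num.Theory.
Import numFieldNormedType.Exports.
Local Open Scope classical_set_scope.
Local Open Scope ring_scope.

Section Defs.
Variable R : realType.

Definition unitv (N : nat) (i : 'I_N) : 'rV[R]_N := delta_mx 0 i.

Definition pd (N : nat) (i : 'I_N) (f : 'rV[R]_N -> R) : 'rV[R]_N -> R :=
  fun z => 'D_(unitv i) f z.

Fixpoint iter_pd (N : nat) (s : seq 'I_N) (f : 'rV[R]_N -> R) : 'rV[R]_N -> R :=
  match s with
  | [::] => f
  | i :: s' => pd i (iter_pd s' f)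
  end.

Definition smooth_on (N : nat) (U : set 'rV[R]_N) (f : 'rV[R]_N -> R) : Prop :=
  forall (s : seq 'I_N) (x : 'rV[R]_N), U x ->
    {for x, continuous (iter_pd s f)} /\
    (forall i : 'I_N, derivable (iter_pd s f) x (unitv i)).

Definition coordf (N : nat) (i : 'I_N) : 'rV[R]_N -> R := fun z => z 0 i.

Definition vf_apply (N : nat) (X : 'I_N -> 'rV[R]_N -> R) (f : 'rV[R]_N -> R)
  : 'rV[R]_N -> R := fun z => \sum_(a < N) X a z * pd a f z.

(* Hamiltonian vector field X_f = {f, .} of the bivector
   Pi = 1/2 Pi^{ab} d_a /\ d_b (Pi antisymmetric):  X_f^b = sum_a Pi^{ab} d_a f *)
Definition ham (N : nat) (Pi : 'rV[R]_N -> 'M[R]_N) (f : 'rV[R]_N -> R)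
  : 'I_N -> 'rV[R]_N -> R :=
  fun b z => \sum_(a < N) pd a f z * Pi z a b.

(* Divergence w.r.t. the volume form mu = rho dz^1 /\ ... /\ dz^N (rho > 0):
   L_X mu = d(i_X mu) = (sum_a d_a (rho X^a)) dz^1..dz^N, hence
   div_mu X = rho^-1 sum_a d_a (rho X^a). *)
Definition divergence (N : nat) (rho : 'rV[R]_N -> R) (X : 'I_N -> 'rV[R]_N -> R)
  : 'rV[R]_N -> R :=
  fun z => (rho z)^-1 * \sum_(a < N) pd a (fun y => rho y * X a y) z.

(* Modular vector field of (R^N, Pi, rho dz), as the operator f |-> div X_f *)
Definition modular (N : nat) (rho : 'rV[R]_N -> R) (Pi : 'rV[R]_N -> 'M[R]_N)
  (f : 'rV[R]_N -> R) : 'rV[R]_N -> R := divergence rho (ham Pi f).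

Definition modular_comp (N : nat) (rho : 'rV[R]_N -> R) (Pi : 'rV[R]_N -> 'M[R]_N)
  (i : 'I_N) : 'rV[R]_N -> R := modular rho Pi (coordf i).

(* Tangent bundle coordinates z = (x, y) in R^(n+n) *)
Definition xpart (n : nat) (z : 'rV[R]_(n + n)) : 'rV[R]_n := lsubmx z.
Definition ypart (n : nat) (z : 'rV[R]_(n + n)) : 'rV[R]_n := rsubmx z.

(* Complete lift of w = 1/2 w^{ij} d_i /\ d_j :
   w^C = w^{ij} d_{x^i} /\ d_{y^j} + 1/2 y^k d_k w^{ij} d_{y^i} /\ d_{y^j},
   written as the antisymmetric coefficient matrix Pi^{ab} on (x,y). *)
Definition complete_lift (n : nat) (w : 'rV[R]_n -> 'M[R]_n)
  : 'rV[R]_(n + n) -> 'M[R]_(n + n) :=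
  fun z => block_mx 0 (w (xpart z)) (- (w (xpart z))^T)
     (\matrix_(i < n, j < n)
        \sum_(k < n) ypart z 0 k * pd k (fun x => w x i j) (xpart z)).

Definition vertical_lift (n : nat) (X : 'I_n -> 'rV[R]_n -> R)
  : 'I_(n + n) -> 'rV[R]_(n + n) -> R :=
  fun a z => match fintype.split a with
             | inl _ => 0
             | inr i => X i (xpart z)
             end.

Definition poisson_on (n : nat) (U : set 'rV[R]_n) (w : 'rV[R]_n -> 'M[R]_n) : Prop :=
  (forall i j, smooth_on U (fun x => w x i j)) /\
  (forall x, U x -> forall i j, w x i j = - w x j i) /\
  (forall x, U x -> forall i j k,
     \sum_(l < n) (w x i l * pd l (fun y => w y j k) x
                 + w x j l * pd l (fun y => w y k i) x
                 + w x k l * pd l (fun y => w y i j) x) = 0).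

Definition riemannian_on (n : nat) (U : set 'rV[R]_n) (g : 'rV[R]_n -> 'M[R]_n) : Prop :=
  (forall i j, smooth_on U (fun x => g x i j)) /\
  (forall x, U x -> (g x)^T = g x) /\
  (forall x, U x -> forall v : 'rV[R]_n, v != 0 -> 0 < (v *m g x *m v^T) 0 0).

Definition dVg (n : nat) (g : 'rV[R]_n -> 'M[R]_n) : 'rV[R]_n -> R :=
  fun x => Num.sqrt (\det (g x)).
Definition PhiTM (n : nat) (g : 'rV[R]_n -> 'M[R]_n) : 'rV[R]_(n + n) -> R :=
  fun z => \det (g (xpart z)).

End Defs.

(* Main.v *)
Require Import Defs.
From HB Require Import structures.
From mathcomp Require Import all_boot all_order all_algebra.
From mathcomp Require Import all_classical all_reals all_analysis.
From mathcomp Require Import ring lra.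
Import Order.TTheory GRing.Theory Num.Theory.
Import numFieldNormedType.Exports.
Local Open Scope classical_set_scope.
Local Open Scope ring_scope.


Section Gen.
Variable R : realType.
Variable V : normedModType R.
Implicit Types (f : V -> R).

Lemma derive_lineE f (y u : V) (a : R) :
  'D_1 (fun s : R => f (y + s *: u)) a = 'D_u f (y + a *: u).
Proof.
rewrite /derive; set g1 := fun h => h^-1 *: _; set g2 := fun h => h^-1 *: _.
suff -> : g1 = g2 by []; apply: funext => h; rewrite /g1 /g2 /=.
by rewrite [_%:A]mulr1 scalerDl addrCA addrA [y + _]addrC -addrA.
Qed.

Lemma derivable_lineE f (y u : V) (a : R) :
  derivable (fun s : R => f (y + s *: u)) a 1 = derivable f (y + a *: u) u.
Proof.
rewrite /derivable; set g1 := fun h => h^-1 *: _; set g2 := fun h => h^-1 *: _.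
suff -> : g1 = g2 by []; apply: funext => h; rewrite /g1 /g2 /=.
by rewrite [_%:A]mulr1 scalerDl addrCA addrA [y + _]addrC -addrA.
Qed.

Lemma derive_lin (W : normedModType R) (h : W -> R) (L : V -> W) (z v : V) :
  (forall t : R, L (t *: v + z) = t *: L v + L z) ->
  'D_v (fun y => h (L y)) z = 'D_(L v) h (L z).
Proof.
move=> HL; rewrite /derive; set g1 := fun h => h^-1 *: _; set g2 := fun h => h^-1 *: _.
suff -> : g1 = g2 by []; apply: funext => t; rewrite /g1 /g2 /=.
by rewrite HL.
Qed.

Lemma derivable_lin (W : normedModType R) (h : W -> R) (L : V -> W) (z v : V) :
  (forall t : R, L (t *: v + z) = t *: L v + L z) ->
  derivable (fun y => h (L y)) z v = derivable h (L z) (L v).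
Proof.
move=> HL; rewrite /derivable; set g1 := fun h => h^-1 *: _; set g2 := fun h => h^-1 *: _.
suff -> : g1 = g2 by []; apply: funext => t; rewrite /g1 /g2 /=.
by rewrite HL.
Qed.

Lemma derive_line0 f (x v : V) :
  'D_v f x = 'D_1 (fun h : R => f (h *: v + x)) 0.
Proof.
rewrite /derive; set g1 := fun h => h^-1 *: _; set g2 := fun h => h^-1 *: _.
suff -> : g1 = g2 by []; apply: funext => h; rewrite /g1 /g2 /=.
by rewrite addr0 scale0r add0r [_ *: 1]mulr1.
Qed.

Lemma chain (phi : R -> R) f (x v : V) :
  derivable f x v -> derivable phi (f x) 1 ->
  derivable (fun y => phi (f y)) x v /\
  'D_v (fun y => phi (f y)) x = 'D_1 phi (f x) * 'D_v f x.
Proof.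
move=> df dphi.
have dl : derivable (fun h : R => f (h *: v + x)) 0 1 by exact: (derivable1P f x v).1.
have dphi' : derivable phi ((fun h : R => f (h *: v + x)) 0) 1.
  by rewrite /= scale0r add0r.
have := derive1_comp dl dphi'.
rewrite !derive1E /= scale0r add0r => E.
split; last by rewrite derive_line0 [in RHS]derive_line0 -E.
apply/(derivable1P (fun y => phi (f y)) x v).2.
apply/derivable1_diffP; apply: differentiable_comp.
  exact/derivable1_diffP.
by apply/derivable1_diffP; rewrite /= scale0r add0r.
Qed.

End Gen.


Section Clairaut.
Variable R : realType.
Variable V : normedModType R.
Implicit Types (f : V -> R).

Lemma mvt_line f (y u : V) (t : R) :
  0 < t -> (forall a, 0 <= a <= t -> derivable f (y + a *: u) u) ->
  exists2 c, 0 <= c <= t & f (y + t *: u) - f y = 'D_u f (y + c *: u) * t.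
Proof.
move=> t0 hd.
have hd' : forall a, a \in `[0, t] -> derivable (fun s : R => f (y + s *: u)) a 1.
  by move=> a; rewrite in_itv /= => /hd; rewrite derivable_lineE.
have := @MVT R (fun s => f (y + s *: u)) (fun s => 'D_u f (y + s *: u)) 0 t t0.
case.
- move=> a ha; apply: DeriveDef; first by apply: hd'; rewrite in_itv /= !ltW ?(itvP ha).
  by rewrite derive_lineE.
- by apply: derivable_within_continuous => a; apply: hd'.
move=> c hc; rewrite scale0r addr0 subr0 => ->; exists c => //.
by rewrite !ltW ?(itvP hc).
Qed.


Lemma derive_shiftE f (p u w : V) :
  'D_u (fun q => f (q + w)) p = 'D_u f (p + w).
Proof.
rewrite /derive; set g1 := fun h => h^-1 *: _; set g2 := fun h => h^-1 *: _.
suff -> : g1 = g2 by []; apply: funext => h; by rewrite /g1 /g2 /= [h *: u + (p + w)]addrA.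
Qed.

Lemma derivable_shiftE f (p u w : V) :
  derivable (fun q => f (q + w)) p u = derivable f (p + w) u.
Proof.
rewrite /derivable; set g1 := fun h => h^-1 *: _; set g2 := fun h => h^-1 *: _.
suff -> : g1 = g2 by []; apply: funext => h; by rewrite /g1 /g2 /= [h *: u + (p + w)]addrA.
Qed.

Lemma mixed f (z u v : V) (t : R) (Q : set V) :
  0 < t ->
  (forall a b, 0 <= a <= t -> 0 <= b <= t -> Q (z + a *: u + b *: v)) ->
  (forall y, Q y -> derivable f y u /\ derivable ('D_u f) y v) ->
  exists a, exists b, [/\ 0 <= a <= t, 0 <= b <= t &
    f (z + t *: u + t *: v) - f (z + t *: u) - (f (z + t *: v) - f z)
    = 'D_v ('D_u f) (z + a *: u + b *: v) * t * t].
Proof.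
move=> t0 hQ hd.
have t0' : (0:R) <= 0 <= t by rewrite lexx ltW.
have tt : (0:R) <= t <= t by rewrite lexx ltW.
pose F := fun p => f (p + t *: v) - f p.
have dF : forall a, 0 <= a <= t -> derivable F (z + a *: u) u.
  move=> a ha; apply: derivableB.
    rewrite derivable_shiftE; apply: (hd _ (hQ _ _ ha tt)).1.
  by have := (hd _ (hQ _ _ ha t0')).1; rewrite scale0r addr0.
have [c hc Ec] := @mvt_line F z u t t0 dF.
have [b hb Eb] : exists2 b, 0 <= b <= t &
   'D_u f (z + c *: u + t *: v) - 'D_u f (z + c *: u)
   = 'D_v ('D_u f) (z + c *: u + b *: v) * t.
  apply: mvt_line => // b hb; exact: (hd _ (hQ _ _ hc hb)).2.
exists c, b; split => //.
have -> : f (z + t *: u + t *: v) - f (z + t *: u) - (f (z + t *: v) - f z)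
   = F (z + t *: u) - F z by rewrite /F; rewrite addrAC; ring.
rewrite Ec -Eb /F deriveB; last first.
- by have := (hd _ (hQ _ _ hc t0')).1; rewrite scale0r addr0.
- by rewrite derivable_shiftE; apply: (hd _ (hQ _ _ hc tt)).1.
by rewrite derive_shiftE.
Qed.


Lemma cancel_tt (A B X Y t : R) : t != 0 -> X = A * t * t -> Y = B * t * t -> X = Y -> A = B.
Proof.
move=> t0 -> -> /eqP; rewrite -subr_eq0 -!mulrA -mulrBl mulf_eq0 mulf_eq0 (negbTE t0) !orbF subr_eq0.
by move/eqP.
Qed.

Lemma swap4 (a b c d : R) : a - b - (c - d) = a - c - (b - d).
Proof. by ring. Qed.

Lemma tri' (x y p q e : R) : e = `|x - y| -> p = q -> `|x - p| < e / 2 -> `|y - q| < e / 2 -> False.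
Proof.
move=> -> -> h1 h2.
have e0 : `|x - y| <= `|x - q| + `|y - q|.
  by rewrite (_ : x - y = (x - q) - (y - q)) ?ler_normB //; ring.
by have := le_lt_trans e0 (ltrD h1 h2); rewrite -splitr ltxx.
Qed.

Lemma clairaut f (z u v : V) (S : set V) :
  nbhs z S ->
  (forall y, S y -> [/\ derivable f y u, derivable f y v,
                        derivable ('D_u f) y v & derivable ('D_v f) y u]) ->
  {for z, continuous ('D_v ('D_u f))} -> {for z, continuous ('D_u ('D_v f))} ->
  'D_v ('D_u f) z = 'D_u ('D_v f) z.
Proof.
move=> hS hd c1 c2.

have [//|hne] := eqVneq (('D_v ('D_u f)) z) (('D_u ('D_v f)) z); exfalso.
set d := `|('D_v ('D_u f)) z - ('D_u ('D_v f)) z|.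
have d0 : 0 < d by rewrite normr_gt0 subr_eq0.
have d20 : 0 < d / 2 by rewrite divr_gt0.
have := (cvgrPdist_lt _ _).1 c1 _ d20.
move=> /(_ (nbhs_filter z)) /nbhs_ballP [e1 e10 H1].
have := (cvgrPdist_lt _ _).1 c2 _ d20.
move=> /(_ (nbhs_filter z)) /nbhs_ballP [e2 e20 H2].
case/nbhs_ballP: hS => e3 e30 H3.
pose del := Num.min e1 (Num.min e2 e3).
have del0 : 0 < del by rewrite /del !lt_min e10 e20 e30.
have Hdel : forall y, ball z del y -> [/\ S y, `|('D_v ('D_u f)) z - ('D_v ('D_u f)) y| < d / 2 & `|('D_u ('D_v f)) z - ('D_u ('D_v f)) y| < d / 2].
  move=> y hy; split.
  - by apply: H3; apply: le_ball hy; rewrite /del !ge_min lexx !orbT.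
  - by apply: H1; apply: le_ball hy; rewrite /del !ge_min lexx.
  - by apply: H2; apply: le_ball hy; rewrite /del !ge_min lexx !orbT.

pose t := del / (`|u| + `|v| + 1).
have den0 : 0 < `|u| + `|v| + 1 by rewrite ltr_wpDl // addr_ge0.
have t0 : 0 < t by rewrite divr_gt0.
have inB : forall a b, 0 <= a <= t -> 0 <= b <= t -> ball z del (z + a *: u + b *: v).
  move=> a b /andP[a0 aT] /andP[b0 bT].
  rewrite -ball_normE /= (_ : z - (z + a *: u + b *: v) = - (a *: u + b *: v)); last by rewrite opprD opprD addrA addrA subrr sub0r opprD.
  rewrite normrN.
  rewrite (le_lt_trans (ler_normD _ _)) // !normrZ (ger0_norm a0) (ger0_norm b0).
  have -> : del = t * (`|u| + `|v| + 1) by rewrite /t divfK // gt_eqF.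
  apply: (@le_lt_trans _ _ (t * `|u| + t * `|v|)).
    by apply: lerD; apply: ler_wpM2r.
  by rewrite mulrDr mulrDr mulr1 ltrDl.
have [a1 [b1 [ha1 hb1 E1]]] := @mixed f z u v t (ball z del) t0
  (fun a b ha hb => inB a b ha hb)
  (fun y hy => let: And3 Sy _ _ := Hdel y hy in
     let: And4 h1 _ h3 _ := hd y Sy in conj h1 h3).
have [a2 [b2 [ha2 hb2 E2]]] := @mixed f z v u t (ball z del) t0
  (fun a b ha hb => eq_ind _ (ball z del) (inB b a hb ha) _ (addrAC _ _ _))
  (fun y hy => let: And3 Sy _ _ := Hdel y hy in
     let: And4 _ h2 _ h4 := hd y Sy in conj h2 h4).
have E : ('D_v ('D_u f)) (z + a1 *: u + b1 *: v) = ('D_u ('D_v f)) (z + a2 *: v + b2 *: u).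
  apply: (@cancel_tt _ _ _ _ t (lt0r_neq0 t0) E1 E2).
  by rewrite [z + t *: v + t *: u]addrAC swap4.
have [_ h1 _] := Hdel _ (inB _ _ ha1 hb1).
have [_ _ h2] := Hdel _ (eq_ind _ (ball z del) (inB _ _ hb2 ha2) _ (addrAC _ _ _)).
exact: (@tri' _ _ _ _ d (erefl d) E h1 h2).
Qed.

End Clairaut.


Section PW.
Variable R : realType.
Variable V : normedModType R.
Implicit Types (f g : V -> R).

Lemma derivableM' f g x v : derivable f x v -> derivable g x v ->
  derivable (fun y => f y * g y) x v.
Proof. exact: derivableM. Qed.

Lemma deriveM' f g x v : derivable f x v -> derivable g x v ->
  'D_v (fun y => f y * g y) x = f x * 'D_v g x + g x * 'D_v f x.
Proof. exact: deriveM. Qed.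

Lemma derivableD' f g x v : derivable f x v -> derivable g x v ->
  derivable (fun y => f y + g y) x v.
Proof. exact: derivableD. Qed.

Lemma deriveD' f g x v : derivable f x v -> derivable g x v ->
  'D_v (fun y => f y + g y) x = 'D_v f x + 'D_v g x.
Proof. exact: deriveD. Qed.

Lemma derivableN' f x v : derivable f x v -> derivable (fun y => - f y) x v.
Proof. exact: derivableN. Qed.

Lemma deriveN' f x v : derivable f x v -> 'D_v (fun y => - f y) x = - 'D_v f x.
Proof. exact: deriveN. Qed.

Lemma derivable_cst' (c : R) x v : derivable (fun _ : V => c) x v.
Proof. exact: derivable_cst. Qed.

Lemma derive_cst' (c : R) x v : 'D_v (fun _ : V => c) x = 0.
Proof. exact: derive_cst. Qed.

Lemma derivable_bigsum (I : Type) (r : seq I) (P : pred I) (h : I -> V -> R) x v :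
  (forall i, P i -> derivable (h i) x v) ->
  derivable (fun y => \sum_(i <- r | P i) h i y) x v.
Proof.
move=> hd; elim: r => [|a r IH].
  by under eq_fun do rewrite big_nil; exact: derivable_cst'.
under eq_fun do rewrite big_cons.
case: (boolP (P a)) => Pa; last exact: IH.
exact: derivableD' (hd _ Pa) IH.
Qed.

Lemma derive_bigsum (I : Type) (r : seq I) (P : pred I) (h : I -> V -> R) x v :
  (forall i, P i -> derivable (h i) x v) ->
  'D_v (fun y => \sum_(i <- r | P i) h i y) x = \sum_(i <- r | P i) 'D_v (h i) x.
Proof.
move=> hd; elim: r => [|a r IH].
  by under eq_fun do rewrite big_nil; rewrite big_nil derive_cst'.
under eq_fun do rewrite big_cons.
rewrite big_cons.
case: (boolP (P a)) => Pa; last exact: IH.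
rewrite deriveD' ?IH //; [exact: hd | exact: derivable_bigsum].
Qed.

Lemma derivable_bigprod (I : Type) (r : seq I) (P : pred I) (h : I -> V -> R) x v :
  (forall i, P i -> derivable (h i) x v) ->
  derivable (fun y => \prod_(i <- r | P i) h i y) x v.
Proof.
move=> hd; elim: r => [|a r IH].
  by under eq_fun do rewrite big_nil; exact: derivable_cst'.
under eq_fun do rewrite big_cons.
case: (boolP (P a)) => Pa; last exact: IH.
exact: derivableM' (hd _ Pa) IH.
Qed.

End PW.

Lemma derivable_det (R : realType) (V : normedModType R) n (G : V -> 'M[R]_n) x v :
  (forall i j, derivable (fun y => G y i j) x v) ->
  derivable (fun y => \det (G y)) x v.
Proof.
move=> hd; rewrite /determinant.
apply: derivable_bigsum => s _.
apply: derivableM'; first exact: derivable_cst'.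
by apply: derivable_bigprod => i _.
Qed.


Lemma antisym_sum0 (R : realType) N (Pi Fab : 'I_N -> 'I_N -> R) :
  (forall a b, Fab a b = Fab b a) -> (forall a b, Pi a b = - Pi b a) ->
  \sum_a \sum_b Pi b a * Fab a b = 0.
Proof.
move=> hF hP.
have E : \sum_a \sum_b Pi b a * Fab a b = - \sum_a \sum_b Pi b a * Fab a b.
  rewrite [LHS]exchange_big -sumrN; apply: eq_bigr => b _.
  rewrite -sumrN; apply: eq_bigr => a _.
  by rewrite hP hF mulNr.
move: E; set S := \sum_a _.
move/eqP; rewrite -addr_eq0 -mulr2n -mulr_natr mulf_eq0 pnatr_eq0 orbF.
by move/eqP.
Qed.

Lemma alg (R : realType) N (r : R) (Fb : 'I_N -> R) (Pd Pi Fab : 'I_N -> 'I_N -> R)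
  (rd : 'I_N -> R) :
  r != 0 -> (forall a b, Fab a b = Fab b a) -> (forall a b, Pi a b = - Pi b a) ->
  r^-1 * \sum_a (r * \sum_b (Fb b * Pd b a + Pi b a * Fab a b)
                 + (\sum_b Fb b * Pi b a) * rd a)
  = \sum_b Fb b * \sum_a (Pd b a + r^-1 * rd a * Pi b a).
Proof.
move=> r0 hF hP.
have S0 := @antisym_sum0 R N Pi Fab hF hP.
transitivity (\sum_a \sum_b (Fb b * Pd b a + r^-1 * rd a * Fb b * Pi b a)
              + \sum_a \sum_b Pi b a * Fab a b).
  rewrite -big_split /= mulr_sumr; apply: eq_bigr => a _.
  rewrite -big_split /= mulrDr mulrA mulVf // mul1r mulr_suml mulr_sumr -big_split /=.
  by apply: eq_bigr => b _; ring.
rewrite S0 addr0 exchange_big /=; apply: eq_bigr => b _.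
by rewrite mulr_sumr; apply: eq_bigr => a _; ring.
Qed.

Lemma modular_expand (R : realType) N (rho : 'rV[R]_N -> R) (Pi : 'rV[R]_N -> 'M[R]_N)
  (F : 'rV[R]_N -> R) (z : 'rV[R]_N) :
  rho z != 0 ->
  (forall a, derivable rho z (unitv R a)) ->
  (forall a b, derivable (fun y => Pi y b a) z (unitv R a)) ->
  (forall a b, derivable (pd b F) z (unitv R a)) ->
  (forall a b, pd a (pd b F) z = pd b (pd a F) z) ->
  (forall a b, Pi z a b = - Pi z b a) ->
  modular rho Pi F z
  = \sum_b pd b F z * \sum_a (pd a (fun y => Pi y b a) z
                              + (rho z)^-1 * pd a rho z * Pi z b a).
Proof.
move=> r0 drho dPi dF sF aP.
rewrite /modular /divergence /ham.
have E : forall a, pd a (fun y => rho y * \sum_b pd b F y * Pi y b a) z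
   = rho z * \sum_b (pd b F z * pd a (fun y => Pi y b a) z + Pi z b a * pd a (pd b F) z)
     + (\sum_b pd b F z * Pi z b a) * pd a rho z.
  move=> a; rewrite /pd deriveM'; last 2 first.
  - exact: drho.
  - by apply: derivable_bigsum => b _; apply: derivableM'; [exact: dF | exact: dPi].
  rewrite derive_bigsum; last first.
    by move=> b _; apply: derivableM'; [exact: dF | exact: dPi].
  congr (_ * _ + _); apply: eq_bigr => b _.
  rewrite deriveM'; [by [] | exact: dF | exact: dPi].
rewrite (eq_bigr _ (fun a _ => E a)).
exact: (@alg R N (rho z) (fun b => pd b F z) (fun b a => pd a (fun y => Pi y b a) z)
          (fun b a => Pi z b a) (fun a b => pd a (pd b F) z) (fun a => pd a rho z) r0 sF aP).
Qed.


Lemma vvT_ge0 (R : realType) n (v : 'rV[R]_n) : 0 <= (v *m v^T) 0 0.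
Proof.
rewrite mxE; apply: sumr_ge0 => j _; by rewrite mxE -expr2 sqr_ge0.
Qed.

Lemma entry_comb (R : realType) (X Y : 'M[R]_1) (a b : R) :
  (a *: X + b *: Y) 0 0 = a * X 0 0 + b * Y 0 0.
Proof. by rewrite !mxE. Qed.

Lemma posdef_det (R : realType) n (A : 'M[R]_n) :
  (forall v : 'rV_n, v != 0 -> 0 < (v *m A *m v^T) 0 0) -> 0 < \det A.
Proof.
move=> hA.
pose M := fun t : R => t *: A + (1 - t) *: 1%:M.
pose psi := fun t : R => \det (M t).
have Mnz : forall t, 0 <= t <= 1 -> psi t != 0.
  move=> t /andP[t0 t1]; have [->|tn0] := eqVneq t 0.
    by rewrite /psi /M scale0r add0r subr0 scale1r det1 oner_neq0.
  have tp : 0 < t by rewrite lt_def tn0 t0.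
  apply/negP => /det0P [v vn0 vM].
  have : (v *m M t *m v^T) 0 0 = 0 by rewrite vM mul0mx mxE.
  rewrite /M mulmxDr mulmxDl -!scalemxAr -!scalemxAl mulmx1 entry_comb => E.
  have h1 := hA v vn0; have h2 := @vvT_ge0 R n v.
  have : 0 < t * (v *m A *m v^T) 0 0 + (1 - t) * (v *m v^T) 0 0.
    by rewrite ltr_pwDl // ?mulr_gt0 // mulr_ge0 // subr_ge0.
  by rewrite E ltxx.
have dpsi : forall t, derivable psi t 1.
  move=> t; apply: derivable_det => i j.
  rewrite /M.
  under eq_fun do rewrite !mxE.
  apply: derivableD'; apply: derivableM'.
  - exact: derivable_id.
  - exact: derivable_cst'.
  - by apply: derivableB; [exact: derivable_cst'|exact: derivable_id].
  - exact: derivable_cst'.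
have cpsi : {within `[0, 1], continuous psi}.
  by apply: derivable_within_continuous => t _; exact: dpsi.
have psi0 : psi 0 = 1 by rewrite /psi /M scale0r add0r subr0 scale1r det1.
have psi1 : psi 1 = \det A by rewrite /psi /M scale1r subrr scale0r addr0.
rewrite -psi1; rewrite lt_neqAle eq_sym Mnz ?lexx ?ler01 //=.
rewrite leNgt; apply/negP => hneg.
have hv : Num.min (psi 0) (psi 1) <= 0 <= Num.max (psi 0) (psi 1).
  by rewrite psi0 ge_min le_max (ltW hneg) ler01 orbT.
have [c hc Ec] := @IVT R psi 0 1 0 ler01 cpsi hv.
have hc' : 0 <= c <= 1 by rewrite !(itvP hc).
by have := Mnz c hc'; rewrite Ec eqxx.
Qed.


Section Blocks.
Variable R : realType.
Variable n : nat.

Lemma unitvE N (a : 'I_N) (k : 'I_N) : unitv R a 0 k = (a == k)%:R.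
Proof. by rewrite /unitv mxE eqxx /= eq_sym. Qed.

Lemma lsub_unit_l (j : 'I_n) : lsubmx (unitv R (lshift n j)) = unitv R j.
Proof. by apply/matrixP => i k; rewrite !mxE eq_lshift. Qed.

Lemma lsub_unit_r (j : 'I_n) : lsubmx (unitv R (rshift n j)) = 0.
Proof. by apply/matrixP => i k; rewrite !mxE eq_sym eq_lrshift andbF. Qed.

Lemma lsub_lin (t : R) (v z : 'rV[R]_(n + n)) :
  lsubmx (t *: v + z) = t *: lsubmx v + lsubmx z.
Proof. by apply/matrixP => i k; rewrite !mxE. Qed.

Lemma ordsplit (P : 'I_(n + n) -> Prop) :
  (forall j, P (lshift n j)) -> (forall j, P (rshift n j)) -> forall a, P a.
Proof.
move=> hl hr a; rewrite -(splitK a); case: (fintype.split a) => j /=; [exact: hl | exact: hr].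
Qed.

Lemma dx_l (h : 'rV[R]_n -> R) z (j : 'I_n) :
  'D_(unitv R (lshift n j)) (fun y => h (xpart y)) z = 'D_(unitv R j) h (xpart z).
Proof. by rewrite (@derive_lin R _ _ h (@xpart R n) z _ (fun t => lsub_lin t _ z)) /xpart lsub_unit_l. Qed.

Lemma dx_r (h : 'rV[R]_n -> R) z (j : 'I_n) :
  'D_(unitv R (rshift n j)) (fun y => h (xpart y)) z = 0.
Proof. by rewrite (@derive_lin R _ _ h (@xpart R n) z _ (fun t => lsub_lin t _ z)) /xpart lsub_unit_r derive0. Qed.

Lemma dbx_l (h : 'rV[R]_n -> R) z (j : 'I_n) :
  derivable h (xpart z) (unitv R j) ->
  derivable (fun y => h (xpart y)) z (unitv R (lshift n j)).
Proof. by rewrite (@derivable_lin R _ _ h (@xpart R n) z _ (fun t => lsub_lin t _ z)) /xpart lsub_unit_l. Qed.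

Lemma dbx_r (h : 'rV[R]_n -> R) z (j : 'I_n) :
  derivable (fun y => h (xpart y)) z (unitv R (rshift n j)).
Proof. by rewrite (@derivable_lin R _ _ h (@xpart R n) z _ (fun t => lsub_lin t _ z)) /xpart lsub_unit_r; exact: derivable0. Qed.

Lemma coord_lin N (k : 'I_N) (t : R) (v p : 'rV[R]_N) :
  (t *: v + p) 0 k = t *: v 0 k + p 0 k.
Proof. by rewrite !mxE. Qed.

Lemma derive_coord N (k : 'I_N) (p v : 'rV[R]_N) : 'D_v (fun r : 'rV[R]_N => r 0 k) p = v 0 k.
Proof.
have := @derive_lin R _ _ (fun r : R => r) (fun r : 'rV[R]_N => r 0 k) p v (fun t => @coord_lin N k t v p).
by move=> ->; rewrite derive_id.
Qed.

Lemma derivable_coord N (k : 'I_N) (p v : 'rV[R]_N) : derivable (fun r : 'rV[R]_N => r 0 k) p v.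
Proof.
have := @derivable_lin R _ _ (fun r : R => r) (fun r : 'rV[R]_N => r 0 k) p v (fun t => @coord_lin N k t v p).
by move=> ->; exact: derivable_id.
Qed.

Lemma pd_coord N (i : 'I_N) (b : 'I_N) : pd b (coordf i) = fun _ => unitv R b 0 i.
Proof. by apply: funext => y; rewrite /pd /coordf derive_coord. Qed.

Lemma ypart_coord (k : 'I_n) : (fun y : 'rV[R]_(n + n) => ypart y 0 k) = fun y => y 0 (rshift n k).
Proof. by apply: funext => y; rewrite /ypart mxE. Qed.

Variable w : 'rV[R]_n -> 'M[R]_n.

Lemma cl_ll (i j : 'I_n) : (fun y => complete_lift w y (lshift n i) (lshift n j)) = fun _ => 0.
Proof. by apply: funext => y; rewrite /complete_lift block_mxEul mxE. Qed.

Lemma cl_lr (i j : 'I_n) : (fun y => complete_lift w y (lshift n i) (rshift n j)) = fun y => w (xpart y) i j.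
Proof. by apply: funext => y; rewrite /complete_lift block_mxEur. Qed.

Lemma cl_rl (i j : 'I_n) : (fun y => complete_lift w y (rshift n i) (lshift n j)) = fun y => - w (xpart y) j i.
Proof. by apply: funext => y; rewrite /complete_lift block_mxEdl !mxE. Qed.

Lemma cl_rr (i j : 'I_n) : (fun y => complete_lift w y (rshift n i) (rshift n j))
  = fun y => \sum_(k < n) ypart y 0 k * pd k (fun x => w x i j) (xpart y).
Proof. by apply: funext => y; rewrite /complete_lift block_mxEdr mxE. Qed.

End Blocks.


Lemma alg2 (R : realType) (d s P D W : R) : 0 < s -> d = s ^+ 2 ->
  P + d^-1 * D * W + P = 2 * (P + s^-1 * ((2 * s)^-1 * D) * W).
Proof.
move=> s0 ->; have sn : s != 0 by rewrite gt_eqF.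
by field.
Qed.

Section Main.
Variables (R : realType) (n : nat) (U : set 'rV[R]_n) (w g : 'rV[R]_n -> 'M[R]_n).
Hypotheses (hU : open U) (hw : poisson_on U w) (hg : riemannian_on U g).

Lemma wder x i j k : U x -> derivable (fun y => w y i j) x (unitv R k).
Proof. by move=> Ux; case: hw => hs _; exact: ((hs i j) [::] x Ux).2 k. Qed.

Lemma pwder x i j k l : U x -> derivable (pd k (fun y => w y i j)) x (unitv R l).
Proof. by move=> Ux; case: hw => hs _; exact: ((hs i j) [:: k] x Ux).2 l. Qed.

Lemma detder x k : U x -> derivable (fun y => \det (g y)) x (unitv R k).
Proof.
move=> Ux; case: hg => hs _; apply: derivable_det => i j.
exact: ((hs i j) [::] x Ux).2 k.
Qed.

Lemma detpos x : U x -> 0 < \det (g x).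
Proof. by move=> Ux; case: hg => _ [_ hp]; apply: posdef_det; exact: hp. Qed.

Lemma rho_pos x : U x -> 0 < dVg g x.
Proof. by move=> Ux; rewrite /dVg sqrtr_gt0 (detpos x Ux). Qed.

Lemma rho_der x k : U x -> derivable (dVg g) x (unitv R k) /\
  pd k (dVg g) x = (2 * Num.sqrt (\det (g x)))^-1 * pd k (fun y => \det (g y)) x.
Proof.
move=> Ux; have hs := is_derive1_sqrt (detpos x Ux).
have ds : derivable Num.sqrt (\det (g x)) 1 by case: hs.
have [d1 d2] := @chain R _ Num.sqrt (fun y => \det (g y)) x (unitv R k) (detder x k Ux) ds.
split; first exact: d1.
by rewrite /pd /dVg d2 derive_sqrt // detpos.
Qed.

Lemma pw_anti x i j k : U x -> pd k (fun y => w y i j) x = - pd k (fun y => w y j i) x.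
Proof.
move=> Ux; case: hw => _ [ha _].
have Hn : nbhs x U by apply: open_nbhs_nbhs; split.
rewrite /pd (@near_eq_derive R _ _ (fun y => w y i j) (fun y => - w y j i)); last first.
  by near=> y; apply: ha; near: y.
by rewrite deriveN' //; exact: wder.
Unshelve. all: by end_near.
Qed.


Lemma M1 x i : U x -> modular_comp (dVg g) w i x
  = \sum_a (pd a (fun y => w y i a) x + (dVg g x)^-1 * pd a (dVg g) x * w x i a).
Proof.
move=> Ux; rewrite /modular_comp (@modular_expand R n (dVg g) w (coordf i) x).
- rewrite (bigD1 i) //= [X in _ + X]big1 ?addr0.
  + by rewrite /pd /coordf derive_coord unitvE eqxx mul1r.
  + by move=> b /negbTE nb; rewrite /pd /coordf derive_coord unitvE nb mul0r.
- by apply: lt0r_neq0; exact: rho_pos.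
- by move=> a; exact: (rho_der x a Ux).1.
- by move=> a b; exact: wder.
- by move=> a b; rewrite pd_coord; exact: derivable_cst'.
- by move=> a b; rewrite !pd_coord /pd !derive_cst'.
- by case: hw => _ [ha _] a b; exact: ha.
Qed.

Lemma conj2 i x : U x -> modular_comp (dVg g) w i x
  = \sum_(k < n) (pd k (fun y => w y i k) x + w x i k * pd k (fun y => ln (dVg g y)) x).
Proof.
move=> Ux; rewrite M1 //; apply: eq_bigr => k _; congr (_ + _).
case: (is_derive1_ln (rho_pos x Ux)) => dl dv.
have [_ E] := @chain R _ (@ln R) (dVg g) x (unitv R k) (rho_der x k Ux).1 dl.
by rewrite /pd E dv mulrC.
Qed.

Lemma nbhsTU z : U (xpart z) -> nbhs z [set y | U (xpart y)].
Proof.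
move=> Uz; have Hn : nbhs (xpart z) U by apply: open_nbhs_nbhs; split.
exact: (@continuous_lsubmx R 1 n n z U Hn).
Qed.

Lemma schwarzF F z a b : smooth_on [set z | U (xpart z)] F -> U (xpart z) ->
  pd a (pd b F) z = pd b (pd a F) z.
Proof.
move=> hF Uz.
apply: (@clairaut R _ F z (unitv R b) (unitv R a) _ (nbhsTU z Uz)).
- move=> y Sy; split.
  + exact: (hF [::] y Sy).2 b.
  + exact: (hF [::] y Sy).2 a.
  + exact: (hF [:: b] y Sy).2 a.
  + exact: (hF [:: a] y Sy).2 b.
- exact: (hF [:: a; b] z Uz).1.
- exact: (hF [:: b; a] z Uz).1.
Qed.


Lemma CL (F : 'rV[R]_(n + n) -> R) z i : U (xpart z) ->
  \sum_a (pd a (fun y => complete_lift w y (lshift n i) a) z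
          + (PhiTM g z)^-1 * pd a (PhiTM g) z * complete_lift w z (lshift n i) a) = 0.
Proof.
move=> Uz; rewrite big_split_ord /=.
rewrite big1 ?add0r; last first.
  move=> j _; rewrite cl_ll /pd derive_cst'.
  by rewrite /complete_lift block_mxEul mxE !mulr0 addr0.
apply: big1 => j _.
rewrite cl_lr /pd (@dx_r R n (fun x0 => w x0 i j)) /PhiTM (@dx_r R n (fun x0 => \det (g x0))).
by rewrite mulr0 mul0r addr0.
Qed.


Lemma CR (F : 'rV[R]_(n + n) -> R) z i : U (xpart z) ->
  \sum_a (pd a (fun y => complete_lift w y (rshift n i) a) z
          + (PhiTM g z)^-1 * pd a (PhiTM g) z * complete_lift w z (rshift n i) a)
  = 2 * modular_comp (dVg g) w i (xpart z).
Proof.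
move=> Uz; rewrite M1 // big_split_ord /=.
have Er : forall j, pd (rshift n j) (fun y => complete_lift w y (rshift n i) (rshift n j)) z
   + (PhiTM g z)^-1 * pd (rshift n j) (PhiTM g) z * complete_lift w z (rshift n i) (rshift n j)
   = pd j (fun y => w y i j) (xpart z).
  move=> j.
  have Dk : forall k, 'D_(unitv R (rshift n j))
      (fun y => ypart y 0 k * pd k (fun x => w x i j) (xpart y)) z
      = pd k (fun x => w x i j) (xpart z) * (j == k)%:R.
    move=> k; rewrite deriveM'.
    - rewrite (@dx_r R n (pd k (fun x => w x i j))) mulr0 add0r ypart_coord derive_coord.
      by rewrite unitvE eq_rshift.
    - by rewrite ypart_coord; exact: derivable_coord.
    - exact: dbx_r.
  rewrite cl_rr /PhiTM /pd (@dx_r R n (fun x0 => \det (g x0))) mulr0 mul0r addr0.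
  rewrite /pd derive_bigsum; last first.
    move=> k _ /=; apply: (@derivableM' R _ (fun y => ypart y 0 k) (fun y => pd k (fun x => w x i j) (xpart y))).
    - by rewrite ypart_coord; exact: derivable_coord.
    - exact: dbx_r.
  rewrite (eq_bigr _ (fun k _ => Dk k)).
  rewrite (bigD1 j) //= eqxx mulr1 [X in _ + X]big1 ?addr0 //.
  by move=> k nkj; rewrite eq_sym (negbTE nkj) mulr0.
have El : forall j, pd (lshift n j) (fun y => complete_lift w y (rshift n i) (lshift n j)) z
   + (PhiTM g z)^-1 * pd (lshift n j) (PhiTM g) z * complete_lift w z (rshift n i) (lshift n j)
   = - pd j (fun y => w y j i) (xpart z)
     + (\det (g (xpart z)))^-1 * pd j (fun y => \det (g y)) (xpart z) * (- w (xpart z) j i).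
  move=> j; rewrite cl_rl /pd deriveN'; last by apply: (@dbx_l R n (fun x0 => w x0 j i)); exact: wder.
  rewrite (@dx_l R n (fun x0 => w x0 j i)) /PhiTM (@dx_l R n (fun x0 => \det (g x0))).
  by rewrite /complete_lift block_mxEdl !mxE.
rewrite (eq_bigr _ (fun j _ => El j)) (eq_bigr _ (fun j _ => Er j)) -big_split mulr_sumr /=.
apply: eq_bigr => j _.
case: hw => _ [ha _].
rewrite (pw_anti _ j i j Uz) opprK -(ha _ Uz i j) (rho_der _ j Uz).2 /dVg.
apply: alg2; first by rewrite sqrtr_gt0 detpos.
by rewrite sqr_sqrtr // ltW // detpos.
Qed.


Lemma conj1 (F : 'rV[R]_(n + n) -> R) :
  smooth_on [set z | U (xpart z)] F -> forall z, U (xpart z) ->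
  modular (PhiTM g) (complete_lift w) F z
  = 2 * vf_apply (vertical_lift (modular_comp (dVg g) w)) F z.
Proof.
move=> hF z Uz.
have H1 : PhiTM g z != 0 by apply: lt0r_neq0; exact: detpos.
have H2 : forall a, derivable (PhiTM g) z (unitv R a).
  apply: ordsplit => j.
  - by apply: (@dbx_l R n (fun x0 => \det (g x0))); exact: detder.
  - exact: (@dbx_r R n (fun x0 => \det (g x0))).
have H3 : forall a b, derivable (fun y => complete_lift w y b a) z (unitv R a).
  apply: ordsplit => j; apply: ordsplit => i.
  - by rewrite cl_ll; exact: derivable_cst'.
  - rewrite cl_rl; apply: derivableN'.
    by apply: (@dbx_l R n (fun x0 => w x0 j i)); exact: wder.
  - by rewrite cl_lr; exact: (@dbx_r R n (fun x0 => w x0 i j)).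
  - rewrite cl_rr; apply: derivable_bigsum => k _.
    apply: (@derivableM' R _ (fun y => ypart y 0 k) (fun y => pd k (fun x => w x i j) (xpart y))).
    + by rewrite ypart_coord; exact: derivable_coord.
    + exact: dbx_r.
have H4 : forall a b, derivable (pd b F) z (unitv R a).
  by move=> a b; exact: (hF [:: b] z Uz).2 a.
have H5 : forall a b, pd a (pd b F) z = pd b (pd a F) z.
  by move=> a b; exact: schwarzF.
have H6 : forall a b, complete_lift w z a b = - complete_lift w z b a.
  case: hw => _ [ha _].
  apply: ordsplit => i; apply: ordsplit => j; rewrite /complete_lift.
  - by rewrite !block_mxEul !mxE oppr0.
  - by rewrite block_mxEur block_mxEdl !mxE opprK.
  - by rewrite block_mxEur block_mxEdl !mxE.
  - rewrite !block_mxEdr !mxE -sumrN; apply: eq_bigr => k _.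
    by rewrite (pw_anti _ i j k Uz) mulrN.
rewrite (@modular_expand R (n + n) (PhiTM g) (complete_lift w) F z H1 H2 H3 H4 H5 H6).
rewrite /vf_apply !big_split_ord /=.
rewrite (eq_bigr _ (fun i _ => congr1 (fun t => pd (lshift n i) F z * t) (CL F z i Uz))).
rewrite [X in X + _]big1 ?add0r; last by move=> i _; rewrite mulr0.
rewrite (eq_bigr (fun i => pd (rshift n i) F z * (2 * modular_comp (dVg g) w i (xpart z)))); last first.
  by move=> i _; rewrite (CR F z i Uz).
have VL : forall (X : 'I_n -> 'rV[R]_n -> R) i,
    vertical_lift X (lshift n i) z = 0 /\ vertical_lift X (rshift n i) z = X i (xpart z).
  move=> X i; rewrite /vertical_lift.
  by rewrite -[lshift n i]/(unsplit (inl i)) -[rshift n i]/(unsplit (inr i)) !unsplitK.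
rewrite [X in _ * (X + _)]big1 ?add0r; last by move=> i _; rewrite (VL _ i).1 mul0r.
rewrite mulr_sumr; apply: eq_bigr => i _.
by rewrite (VL _ i).2 mulrCA; congr (_ * _); exact: mulrC.
Qed.

End Main.

Theorem proposition1p7 (R : realType) (n : nat) (U : set 'rV[R]_n)
  (w g : 'rV[R]_n -> 'M[R]_n) :
  open U -> poisson_on U w -> riemannian_on U g ->
  (* Delta^TM_Phi = 2 (Delta^M_{dV_g})^V, as derivations on smooth functions on TU *)
  (forall F : 'rV[R]_(n + n) -> R,
     smooth_on [set z | U (xpart z)] F ->
     forall z, U (xpart z) ->
       modular (PhiTM g) (complete_lift w) F z
       = 2 * vf_apply (vertical_lift (modular_comp (dVg g) w)) F z) /\
  (* coordinate expression of Delta^M_{dV_g} *)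
  (forall (i : 'I_n) x, U x ->
     modular_comp (dVg g) w i x
     = \sum_(k < n) (pd k (fun y => w y i k) x
                     + w x i k * pd k (fun y => ln (dVg g y)) x)).
Proof.
move=> hU hw hg; split.
- move=> F hF z Uz; exact: (@conj1 R n U w g hU hw hg F hF z Uz).
- move=> i x Ux; exact: (@conj2 R n U w g hw hg i x Ux).
Qed.
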